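(* Let $K$ be a field of characteristic $0$ and let $S$ be a finite set of non-zero integers. Then there exists a positive integer $N$ such that $X_N^S=K^S$.
   Context: $K^S$ denotes the $K$-algebra of all functions $S\to K$ (with pointwise operations). Define $\gamma^S\colon K^*\to K^S$ by $\gamma^S(x)(s):=x^s$ for $s\in S$. For a positive integer $k$, let $X_k^S:=\{\sum_{i=1}^k\gamma^S(x_i)-\sum_{j=1}^k\gamma^S(y_j) : x_1,\dots,x_k,y_1,\dots,y_k\in K^*\}\subseteq K^S$. *)

(* Defs.v *)
From HB Require Import structures.
From mathcomp Require Import all_boot all_order all_algebra.
Set Implicit Arguments. Unset Strict Implicit. Unset Printing Implicit Defensive.
Import Order.TTheory GRing.Theory Num.Theory.
Local Open Scope ring_scope.

(* The finite set S of integers is represented by a sequence S : seq int;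
   an element of K^S is represented by a function f : int -> K, of which
   only the values on S matter (equality in K^S = agreement on S). *)

Definition gammaS (K : fieldType) (x : K) : int -> K := fun s => x ^ s.

Definition inXS (K : fieldType) (S : seq int) (k : nat) (f : int -> K) : Prop :=
  exists (x y : 'I_k -> K),
    (forall i, x i != 0) /\ (forall j, y j != 0) /\
    (forall s, s \in S ->
       f s = \sum_(i < k) gammaS (x i) s - \sum_(j < k) gammaS (y j) s).

(* Main.v *)
Require Import Defs.
From HB Require Import structures.
From mathcomp Require Import all_boot all_order all_algebra.
From mathcomp Require Import ring.
Import GRing.Theory.
Local Open Scope ring_scope.

Lemma natf_inj {K : fieldType} (hchar : [pchar K] =i pred0) (m n : nat) :
  (m%:R : K) = n%:R -> m = n.
Proof.
have H := (pcharf0P K).1 hchar.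
wlog le_mn : m n / (m <= n)%N.
  move=> W E; case/orP: (leq_total m n) => h; first exact: W.
  by apply/esym/W.
move=> E; have : ((n - m)%N%:R : K) == 0 by rewrite natrB // E subrr.
by rewrite H subn_eq0 => h; apply/eqP; rewrite eqn_leq le_mn h.
Qed.

Lemma two_neq0 {K : fieldType} (hchar : [pchar K] =i pred0) : (2 : K) != 0.
Proof. by rewrite ((pcharf0P K).1 hchar 2). Qed.

Lemma pow2_eq1 {K : fieldType} (hchar : [pchar K] =i pred0) (z : int) :
  (2 : K) ^ z = 1 -> z = 0.
Proof.
have E n : (2 : K) ^+ n = 1 -> n = 0%N.
  move=> h; have : ((2 ^ n)%N%:R : K) = 1%:R by rewrite natrX h.
  move/(natf_inj hchar) => /eqP; rewrite -[1%N](expn0 2) eqn_exp2l //.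
  by move/eqP.
case: z => n /=.
  by move/E => ->.
move=> h; have : (2 : K) ^+ n.+1 = 1.
  by rewrite -[LHS]invrK; move: h; rewrite /exprz => ->; rewrite invr1.
by move/E.
Qed.

Lemma pow2_inj {K : fieldType} (hchar : [pchar K] =i pred0) (x y : int) :
  (2 : K) ^ x = 2 ^ y -> x = y.
Proof.
move=> h; have : (2 : K) ^ (x - y) = 1.
  rewrite expfzDr ?two_neq0 // h -invr_expz mulfV //.
  by rewrite expfz_eq0 negb_and two_neq0 // orbT.
by move/(pow2_eq1 hchar)/eqP; rewrite subr_eq0 => /eqP.
Qed.

Definition Af {K : fieldType} (r : int) : K := if (0 <= r)%R then 2 else 2^-1.
Definition lam (r : int) : nat := (2 ^ `|r|)%N.

Lemma Af_pow {K : fieldType} r s : (Af r : K) ^ s = 2 ^ (if (0 <= r)%R then s else -s).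
Proof. by rewrite /Af; case: ifP => _ //; rewrite exprz_inv. Qed.

Lemma lam_pow {K : fieldType} r : ((lam r)%:R : K) = 2 ^ (if (0 <= r)%R then r else -r).
Proof.
rewrite /lam natrX; case: r => n //=.
Qed.

Lemma sum_rep {K : fieldType} (l : seq K) n (F : K -> K) :
  \sum_(x <- flatten (nseq n l)) F x = (\sum_(x <- l) F x) *+ n.
Proof.
elim: n => [|n IH]; first by rewrite big_nil.
by rewrite /= big_cat IH mulrS.
Qed.

Lemma kill_gen {K : fieldType} (hchar : [pchar K] =i pred0) (L : seq int) :
  exists a b : seq K, all (fun x => x != 0) (a ++ b) /\
   forall s, \sum_(x <- a) x ^ s - \sum_(x <- b) x ^ s
             = \prod_(r <- L) (Af r ^ s - (lam r)%:R).
Proof.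
elim: L => [|r L [a [b [nz IH]]]].
  exists [:: 1], [::]; split; first by rewrite /= oner_eq0.
  move=> s.
  by rewrite big_seq1 !big_nil subr0 exp1rz.
have Anz : (Af r : K) != 0.
  rewrite /Af; case: ifP => _; rewrite ?invr_eq0 two_neq0 //.
exists (map (fun x => Af r * x) a ++ flatten (nseq (lam r) b)),
       (map (fun x => Af r * x) b ++ flatten (nseq (lam r) a)).
split.
  move: nz; rewrite !all_cat => /andP[na nb].
  rewrite -andbA; apply/and4P; split.
  - by rewrite all_map; apply/allP => x xa /=; rewrite mulf_neq0 // (allP na).
  - by elim: (lam r) => //= n IHn; rewrite all_cat nb.
  - by rewrite all_map; apply/allP => x xb /=; rewrite mulf_neq0 // (allP nb).
  - by elim: (lam r) => //= n IHn; rewrite all_cat na.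
move=> s; rewrite big_cons -IH !big_cat /= !sum_rep !big_map.
have E l : \sum_(j <- l) (Af r * j) ^ s = Af r ^ s * \sum_(j <- l) j ^ s.
  by rewrite mulr_sumr; apply: eq_bigr => j _; rewrite expfzMl.
rewrite !E.
move: (Af r ^ s) (lam r) (\sum_(x <- a) x ^ s) (\sum_(x <- b) x ^ s) => p q u v.
ring.
Qed.

Lemma kill {K : fieldType} (hchar : [pchar K] =i pred0) (L : seq int) (s0 : int) :
  s0 \notin L ->
  exists a b : seq K, all (fun x => x != 0) (a ++ b) /\
   (forall s, s \in L -> \sum_(x <- a) x ^ s - \sum_(x <- b) x ^ s = 0) /\
   \sum_(x <- a) x ^ s0 - \sum_(x <- b) x ^ s0 != 0.
Proof.
move=> s0L; have [a [b [nz H]]] := kill_gen hchar L.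
exists a, b; split => //; split.
  move=> s sL; rewrite H (big_rem s sL) /= Af_pow lam_pow subrr mul0r //.
rewrite H prodf_seq_neq0; apply/allP => r rL /=.
rewrite subr_eq0 Af_pow lam_pow; apply/negP => /eqP /(pow2_inj hchar) E.
have : s0 = r by case: ifP E => _ // /oppr_inj.
by move=> e; move: s0L; rewrite e rL.
Qed.

Definition Rep {K : fieldType} (S : seq int) (P Q : seq K) (g : int -> K) :=
  forall s, s \in S -> g s = \sum_(x <- P) x ^ s - \sum_(x <- Q) x ^ s.

Lemma Rep_ext {K : fieldType} S (P Q : seq K) g h :
  (forall s, s \in S -> g s = h s) -> Rep S P Q g -> Rep S P Q h.
Proof. by move=> E R s sS; rewrite -E // R. Qed.

Lemma Rep_cat {K : fieldType} S (P1 Q1 P2 Q2 : seq K) g1 g2 :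
  Rep S P1 Q1 g1 -> Rep S P2 Q2 g2 ->
  Rep S (P1 ++ P2) (Q1 ++ Q2) (fun s => g1 s + g2 s).
Proof.
move=> R1 R2 s sS; rewrite R1 // R2 // !big_cat /=.
move: (\sum_(x <- P1) _) (\sum_(x <- P2) _) (\sum_(x <- Q1) _) (\sum_(x <- Q2) _).
move=> *; ring.
Qed.

Arguments Rep_cat {K S P1 Q1 P2 Q2 g1 g2}.

Lemma Rep_neg {K : fieldType} S (P Q : seq K) g :
  Rep S P Q g -> Rep S Q P (fun s => - g s).
Proof. by move=> R s sS; rewrite R // opprB. Qed.

Lemma Rep_scale {K : fieldType} S (P Q : seq K) g t :
  Rep S P Q g -> Rep S (map (fun x => x * t) P) (map (fun x => x * t) Q)
                      (fun s => t ^ s * g s).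
Proof.
move=> R s sS; rewrite R // !big_map.
have E l : \sum_(j <- l) (j * t) ^ s = t ^ s * \sum_(j <- l) j ^ s.
  by rewrite mulr_sumr; apply: eq_bigr => j _; rewrite expfzMl mulrC.
by rewrite !E mulrBr.
Qed.

Lemma Rep_sum {K : fieldType} {T : Type} S (l : seq T) (P Q : T -> seq K) g :
  (forall b, Rep S (P b) (Q b) (g b)) ->
  Rep S (flatten (map P l)) (flatten (map Q l)) (fun s => \sum_(b <- l) g b s).
Proof.
move=> R; elim: l => [|b l IH] s sS /=; first by rewrite !big_nil subr0.
by rewrite big_cons (Rep_cat (R b) IH s sS).
Qed.

Lemma Rep_pad {K : fieldType} S (P Q : seq K) g x :
  Rep S P Q g -> Rep S (x :: P) (x :: Q) g.
Proof.
move=> R s sS; rewrite R // !big_cons.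
move: (\sum_(x <- P) _) (\sum_(x <- Q) _) => *; ring.
Qed.

Lemma size_flat_map {K : fieldType} {T : Type} (l : seq T) (f : T -> K -> K) (a : seq K) :
  size (flatten (map (fun b => map (f b) a) l)) = (size l * size a)%N.
Proof. by elim: l => //= b l IH; rewrite size_cat size_map IH mulSn. Qed.

Lemma Rep_inXS {K : fieldType} S (P Q : seq K) f N :
  all (fun x => x != 0) (P ++ Q) -> size P = N -> size Q = N ->
  Rep S P Q f -> inXS S N f.
Proof.
move=> nz sP sQ R.
move: nz; rewrite all_cat => /andP[/allP nP /allP nQ].
exists (fun i => nth 1 P i), (fun i => nth 1 Q i); split; last split.
- move=> i; apply: nP; apply: mem_nth; rewrite sP; exact: ltn_ord.
- move=> i; apply: nQ; apply: mem_nth; rewrite sQ; exact: ltn_ord.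
move=> s sS; rewrite R // /gammaS.
rewrite (big_nth 1) (big_nth 1 (r:=Q)) sP sQ !big_mkord //.
Qed.

Arguments Rep_ext {K S P Q g h}.
Arguments Rep_neg {K S P Q g}.
Arguments Rep_scale {K S P Q g} t.
Arguments Rep_sum {K T S} l {P Q g}.
Arguments Rep_pad {K S P Q g} x.
Arguments Rep_inXS {K S P Q f N}.

Lemma safe {K : fieldType} (hchar : [pchar K] =i pred0) (B : seq K) (d : K) :
  exists t, t \notin B /\ t - d \notin B.
Proof.
set L := map (fun k => k%:R : K) (iota 0 (2 * size B).+1).
have uL : uniq L.
  by rewrite map_inj_uniq ?iota_uniq // => m n /(natf_inj hchar).
have : has (fun t => (t \notin B) && (t - d \notin B)) L.
  apply/negPn/negP => /hasPn H.
  have sub : {subset L <= B ++ map (fun x => x + d) B}.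
    move=> x xL; have := H x xL; rewrite negb_and !negbK => /orP[xB|xdB].
      by rewrite mem_cat xB.
    rewrite mem_cat; apply/orP; right; apply/mapP; exists (x - d) => //.
    by rewrite subrK.
  have := uniq_leq_size uL sub.
  by rewrite size_cat size_map /L size_map size_iota ltnNge mul2n -addnn leqnn.
by case/hasP => t _ /andP[h1 h2]; exists t.
Qed.

Lemma poly_id {K : fieldType} (p q : seq K) (n : nat) (k : K) :
  (0 < n)%N ->
  (forall i, (i < n.+1)%N -> i != 1%N ->
     \sum_(b <- p) b ^+ i - \sum_(b <- q) b ^+ i = 0) ->
  \sum_(b <- p) b ^+ 1 - \sum_(b <- q) b ^+ 1 = k ->
  forall t, \sum_(b <- p) (b * t + 1) ^+ n - \sum_(b <- q) (b * t + 1) ^+ n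
            = (k *+ n) * t.
Proof.
move=> n0 Hz H1 t.
have E l : \sum_(b <- l) (b * t + 1) ^+ n
           = \sum_(i < n.+1) ((\sum_(b <- l) b ^+ i) * t ^+ i) *+ 'C(n, i).
  under eq_bigr do rewrite exprD1n.
  rewrite exchange_big /=; apply: eq_bigr => i _.
  rewrite mulr_suml -sumrMnl; apply: eq_bigr => b _.
  by rewrite exprMn.
rewrite !E -sumrB.
under eq_bigr do rewrite -mulrnBl -mulrBl.
case: n n0 Hz E => // m _ Hz E.
rewrite big_ord_recl big_ord_recl [X in _ + (_ + X)]big1 ?addr0.
  rewrite Hz // mul0r mul0rn add0r.
  by rewrite /= H1 bin1 expr1 mulrnAl.
move=> i _ /=; rewrite Hz ?mul0r ?mul0rn //.
by rewrite ltnS ltnS ltn_ord.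
Qed.

Lemma nz_flat {K : fieldType} (l : seq K) (f : K -> K) (a : seq K) :
  all (fun x => x != 0) a -> (forall b, b \in l -> f b != 0) ->
  all (fun x => x != 0) (flatten (map (fun b => map (fun x => x * f b) a) l)).
Proof.
move=> na; elim: l => //= b l IH H.
rewrite all_cat; apply/andP; split; last first.
  by apply: IH => c cl; apply: H; rewrite inE cl orbT.
rewrite all_map; apply/allP => x xa /=; apply: mulf_neq0; first exact: (allP na).
by apply: H; rewrite inE eqxx.
Qed.

Definition tf {K : fieldType} (s0 : int) (b t : K) : K :=
  if (0 <= s0)%R then b * t + 1 else (b * t + 1)^-1.

Lemma tf_pow {K : fieldType} s0 (b t : K) : tf s0 b t ^ s0 = (b * t + 1) ^+ `|s0|%N.
Proof.
rewrite /tf; case: s0 => m //=.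
by rewrite exprz_inv NegzE opprK.
Qed.

Lemma tf_nz {K : fieldType} s0 (b t : K) : b * t + 1 != 0 -> tf s0 b t != 0.
Proof. by rewrite /tf; case: ifP => _ // h; rewrite invr_eq0. Qed.

Lemma component {K : fieldType} (hchar : [pchar K] =i pred0) (S : seq int) (s0 : int) :
  s0 != 0 ->
  exists M : nat, forall v : K, exists P Q : seq K,
    all (fun x => x != 0) (P ++ Q) /\ size P = M /\ size Q = M /\
    Rep S P Q (fun s => if s == s0 then v else 0).
Proof.
move=> s0nz.
have nin1 : s0 \notin [seq s <- S | s != s0] by rewrite mem_filter eqxx.
have [al [be [nzab [Hk Hc]]]] := kill hchar _ _ nin1.
set c1 := \sum_(x <- al) x ^ s0 - \sum_(x <- be) x ^ s0 in Hc.
have R1 : Rep S al be (fun s => if s == s0 then c1 else 0).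
  move=> s sS; case: eqP => [->//|/eqP ne].
  by rewrite Hk // mem_filter ne.
set n := `|s0|%N.
have n0 : (0 < n)%N by rewrite absz_gt0.
have nin2 : (1 : int) \notin [seq Posz j | j <- iota 0 n.+1 & j != 1%N].
  by apply/mapP => -[j]; rewrite mem_filter => /andP[/eqP h _] [] /esym.
have [p [q [nzpq [Hk2 Hc2]]]] := kill hchar _ _ nin2.
set ka := \sum_(x <- p) x ^ (1 : int) - \sum_(x <- q) x ^ (1 : int) in Hc2.
have Pid : forall t, \sum_(b <- p) (b * t + 1) ^+ n - \sum_(b <- q) (b * t + 1) ^+ n
            = (ka *+ n) * t.
  apply: poly_id => // i ilt ine.
  apply: (Hk2 (Posz i)); apply/mapP; exists i => //.
  by rewrite mem_filter ine mem_iota.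
pose Fl (l : seq K) (a : seq K) (t : K) :=
  flatten (map (fun b => map (fun x => x * tf s0 b t) a) l).
pose Pt t := Fl p al t ++ Fl q be t.
pose Qt t := Fl p be t ++ Fl q al t.
have Rt : forall t, Rep S (Pt t) (Qt t)
                     (fun s => if s == s0 then c1 * ((ka *+ n) * t) else 0).
  move=> t.
  have R2 := Rep_cat (Rep_sum p (fun b => Rep_scale (tf s0 b t) R1))
                     (Rep_sum q (fun b => Rep_scale (tf s0 b t) (Rep_neg R1))).
  apply: (Rep_ext _ R2) => s sS /=.
  case: eqP => [->|_]; last first.
    by rewrite oppr0 !big1 ?addr0 // => b _; rewrite mulr0.
  under eq_bigr do rewrite tf_pow.
  under [X in _ + X]eq_bigr do rewrite tf_pow.
  rewrite -Pid -!mulr_suml.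
  move: (\sum_(i <- p) _) (\sum_(i <- q) _) => u w; ring.
have sPt t : size (Pt t) = (size p * size al + size q * size be)%N.
  by rewrite size_cat !size_flat_map.
have sQt t : size (Qt t) = (size p * size be + size q * size al)%N.
  by rewrite size_cat !size_flat_map.
exists ((size p * size al + size q * size be) + (size p * size be + size q * size al))%N.
move=> v.
have kan : ka *+ n != 0.
  rewrite -mulr_natr mulf_neq0 // ((pcharf0P K).1 hchar).
  by rewrite -lt0n.
set d := v / (c1 * (ka *+ n)).
have [t [tB tdB]] := safe hchar [seq - b^-1 | b <- p ++ q] d.
have good : forall u, u \notin [seq - b^-1 | b <- p ++ q] ->
    all (fun x => x != 0) (Pt u ++ Qt u).
  move=> u uB.
  have hb : forall b, b \in p ++ q -> tf s0 b u != 0.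
    move=> b bpq; apply: tf_nz; apply/negP => /eqP e.
    have bnz : b != 0 by apply: (allP nzpq).
    move/negP: uB; apply; apply/mapP; exists b => //.
    apply: (mulfI bnz); rewrite mulrN mulfV //.
    by apply/eqP; rewrite -addr_eq0 e.
  have hp : forall b, b \in p -> tf s0 b u != 0.
    by move=> b bp; apply: hb; rewrite mem_cat bp.
  have hq : forall b, b \in q -> tf s0 b u != 0.
    by move=> b bq; apply: hb; rewrite mem_cat bq orbT.
  move: nzab; rewrite all_cat => /andP[na nb].
  by rewrite !all_cat !nz_flat.
exists (Pt t ++ Qt (t - d)), (Qt t ++ Pt (t - d)).
split.
  move: (good _ tB) (good _ tdB); rewrite !all_cat.
  by move=> /andP[-> ->] /andP[-> ->].
split; first by rewrite size_cat sPt sQt.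
split; first by rewrite size_cat sPt sQt addnC.
apply: (Rep_ext _ (Rep_cat (Rt t) (Rep_neg (Rt (t - d))))) => s sS /=.
case: eqP => _; last by rewrite oppr0 addr0.
rewrite /d; field.
by rewrite Hc Hc2 ((pcharf0P K).1 hchar) -lt0n n0.
Qed.

Lemma allcomp {K : fieldType} (hchar : [pchar K] =i pred0) (S U : seq int) :
  (forall u, u \in U -> u != 0) ->
  exists M : nat, forall f : int -> K, exists P Q : seq K,
    all (fun x => x != 0) (P ++ Q) /\ size P = M /\ size Q = M /\
    Rep S P Q (fun s => \sum_(u <- U) (if s == u then f u else 0)).
Proof.
elim: U => [|u U IH] H.
  exists 0%N => f; exists [::], [::]; split => //; split => //; split => //.
  by move=> s _; rewrite !big_nil subr0.
have [M1 C1] := component hchar S _ (H u (mem_head u U)).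
have [M2 C2] := IH (fun w wU => H w (mem_behead (s := u :: U) wU)).
exists (M1 + M2)%N => f.
have [P1 [Q1 [n1 [s1 [t1 R1]]]]] := C1 (f u).
have [P2 [Q2 [n2 [s2 [t2 R2]]]]] := C2 f.
exists (P1 ++ P2), (Q1 ++ Q2); split.
  move: n1 n2; rewrite !all_cat.
  by move=> /andP[-> ->] /andP[-> ->].
split; first by rewrite size_cat s1 s2.
split; first by rewrite size_cat t1 t2.
apply: (Rep_ext _ (Rep_cat R1 R2)) => s sS /=.
by rewrite big_cons.
Qed.

Theorem theorem3p2 (K : fieldType) (S : seq int)
  (hchar : [pchar K] =i pred0)
  (hS : forall s, s \in S -> s != 0) :
  exists N : nat, (0 < N)%N /\ (forall f : int -> K, inXS S N f).
Proof.
have hU : forall u, u \in undup S -> u != 0 by move=> u; rewrite mem_undup; exact: hS.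
have [M C] := allcomp hchar S _ hU.
exists M.+1; split => // f.
have [P [Q [nz [sP [sQ R]]]]] := C f.
apply: (Rep_inXS (P := 1 :: P) (Q := 1 :: Q)).
- by move: nz; rewrite /= !all_cat /= oner_eq0 => /andP[-> ->].
- by rewrite /= sP.
- by rewrite /= sQ.
apply: (Rep_ext _ (Rep_pad 1 R)) => s sS /=.
rewrite -big_mkcond -big_filter.
have -> : [seq i <- undup S | s == i] = [seq i <- undup S | pred1 s i].
  by apply: eq_filter => i; rewrite /= eq_sym.
by rewrite filter_pred1_uniq ?undup_uniq ?mem_undup // big_seq1.
Qed.
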